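(* Let $x,y$ be two distinct points of the unit disk $\mathbb{B}^2=\{z\in\mathbb{C}:|z|<1\}$. Then the hyperbolic midpoint of the hyperbolic geodesic segment joining $x$ and $y$ is constructible by ruler and compass from the points $0,1,x,y$.
   Context: The hyperbolic distance $\rho$ on $\mathbb{B}^2$ is given by $\sinh\frac{\rho(x,y)}{2}=\frac{|x-y|}{\sqrt{1-|x|^2}\sqrt{1-|y|^2}}$. The hyperbolic geodesic segment $J[x,y]$ is the arc joining $x$ and $y$ of the circle orthogonal to the unit circle $S^1$ (or of the diameter, if $0,x,y$ are collinear) containing $x,y$; its hyperbolic midpoint is the unique $z\in J[x,y]$ with $\rho(x,z)=\rho(z,y)$. A point is constructible by ruler and compass from a finite set $S\subset\mathbb{C}$ if it belongs to the smallest set $C\supseteq S$ closed under adding intersection points of lines through two distinct points of $C$ and circles with centre in $C$ passing through a point of $C$ (so the unit circle, centred at $0$ through $1$, is available). *)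

(* Defs.v *)
(* points of the plane C = R^2 as pairs of Stdlib reals. *)
From Stdlib Require Import Reals Lra.
Open Scope R_scope.

Definition pt := (R * R)%type.

Definition pzero : pt := (0, 0).
Definition pone : pt := (1, 0).

Definition nrm2 (p : pt) : R := fst p * fst p + snd p * snd p.
Definition nrm (p : pt) : R := sqrt (nrm2 p).
Definition psub (p q : pt) : pt := (fst p - fst q, snd p - snd q).
Definition dist (p q : pt) : R := nrm (psub p q).

Definition cross (u v : pt) : R := fst u * snd v - snd u * fst v.

Definition in_disk (p : pt) : Prop := nrm p < 1.

Definition rho (x y : pt) : R :=
  2 * arcsinh (dist x y / (sqrt (1 - nrm2 x) * sqrt (1 - nrm2 y))).

(* hyperbolic geodesic segment J[x,y]:
   - if 0, x, y are collinear: the Euclidean segment [x,y] of the diameter;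
   - otherwise: the arc joining x and y of the circle (center c, radius r)
     orthogonal to the unit circle (|c|^2 = 1 + r^2) through x and y, namely the
     arc lying in the disk, i.e. the minor arc: the points of the circle in the
     closed half-plane bounded by the line xy not containing the center c. *)
Definition in_geodesic (x y z : pt) : Prop :=
  (cross x y = 0 /\
     exists t, 0 <= t <= 1 /\ z = (fst x + t * (fst y - fst x), snd x + t * (snd y - snd x)))
  \/
  (cross x y <> 0 /\
     exists (c : pt) (r : R), 0 < r /\ nrm2 c = 1 + r * r /\
       dist x c = r /\ dist y c = r /\ dist z c = r /\
       cross (psub y x) (psub z x) * cross (psub y x) (psub c x) <= 0).

Definition hyp_midpoint (x y z : pt) : Prop :=
  in_geodesic x y z /\ rho x z = rho z y.

Definition on_line (a b z : pt) : Prop := cross (psub b a) (psub z a) = 0.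
Definition on_circle (c d z : pt) : Prop := dist z c = dist d c.

Inductive constructible (S : pt -> Prop) : pt -> Prop :=
| cons_base z : S z -> constructible S z
| cons_ll a b c d z :
    constructible S a -> constructible S b -> constructible S c -> constructible S d ->
    a <> b -> c <> d ->
    ~ (forall w, on_line a b w <-> on_line c d w) ->
    on_line a b z -> on_line c d z -> constructible S z
| cons_lc a b c d z :
    constructible S a -> constructible S b -> constructible S c -> constructible S d ->
    a <> b -> on_line a b z -> on_circle c d z -> constructible S z
| cons_cc a b c d z :
    constructible S a -> constructible S b -> constructible S c -> constructible S d ->
    ~ (forall w, on_circle a b w <-> on_circle c d w) ->
    on_circle a b z -> on_circle c d z -> constructible S z.

(* Main.v *)
Require Import Defs.
From Stdlib Require Import Reals.
Open Scope R_scope.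
From Stdlib Require Import Lra Nsatz.
Import Defs.

Lemma dist_eq (p q p' q' : pt) : nrm2 (psub p q) = nrm2 (psub p' q') -> dist p q = dist p' q'.
Proof. intro H. unfold dist, nrm. now rewrite H. Qed.

Lemma sq_pos x : x <> 0 -> 0 < x * x.
Proof. intro H. apply (Rsqr_pos_lt x H). Qed.

Lemma pt_neq_pos a1 a2 b1 b2 : (a1,a2) <> (b1,b2) -> 0 < (b1-a1)*(b1-a1)+(b2-a2)*(b2-a2).
Proof.
  intro H. destruct (Req_dec a1 b1) as [E1|E1].
  - destruct (Req_dec a2 b2) as [E2|E2]. { subst; contradiction. }
    assert (0 < (b2-a2)*(b2-a2)) by (apply sq_pos; intro; apply E2; lra). pose proof (Rle_0_sqr (b1-a1)); unfold Rsqr in *; lra.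
  - assert (0 < (b1-a1)*(b1-a1)) by (apply sq_pos; intro; apply E1; lra). pose proof (Rle_0_sqr (b2-a2)); unfold Rsqr in *; lra.
Qed.

Lemma pt_dec (p q : pt) : {p = q} + {p <> q}.
Proof.
  destruct p as [a b], q as [c d]. destruct (Req_EM_T a c), (Req_EM_T b d); subst; auto;
  right; intro E; injection E; intros; contradiction.
Qed.

Definition HS (S : pt -> Prop) := S pzero /\ S pone.

Lemma k_refl S a b : constructible S a -> constructible S b ->
  constructible S (2*fst b - fst a, 2*snd b - snd a).
Proof.
  intros Ha Hb. destruct a as [a1 a2], b as [b1 b2]; simpl.
  destruct (Req_dec a1 b1) as [E1|E1]; [destruct (Req_dec a2 b2) as [E2|E2]|].
  - subst. replace (2*b1-b1) with b1 by ring. replace (2*b2-b2) with b2 by ring. exact Hb.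
  - apply (cons_lc S (a1,a2) (b1,b2) (b1,b2) (a1,a2)); auto.
    + intro E; injection E; lra.
    + unfold on_line, cross, psub; simpl; ring.
    + unfold on_circle; apply dist_eq; unfold nrm2, psub; simpl; ring.
  - apply (cons_lc S (a1,a2) (b1,b2) (b1,b2) (a1,a2)); auto.
    + intro E; injection E; lra.
    + unfold on_line, cross, psub; simpl; ring.
    + unfold on_circle; apply dist_eq; unfold nrm2, psub; simpl; ring.
Qed.

Lemma sqrt3_sq : sqrt 3 * sqrt 3 = 3.
Proof. apply sqrt_sqrt; lra. Qed.

Ltac circ_tac h Hh a1 a2 b1 b2 := match goal with |- ?L = ?R => let E := fresh in assert (E : L - R = (h*h - 3/4)*((b1-a1)*(b1-a1)+(b2-a2)*(b2-a2))) by field; rewrite Hh in E; lra end.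

Lemma k_mid S a b : constructible S a -> constructible S b ->
  constructible S ((fst a + fst b)/2, (snd a + snd b)/2).
Proof.
  intros Ha Hb. destruct a as [a1 a2], b as [b1 b2]; simpl.
  destruct (pt_dec (a1,a2) (b1,b2)) as [E|Hne].
  { injection E; intros; subst. replace ((b1+b1)/2) with b1 by field. replace ((b2+b2)/2) with b2 by field. exact Hb. }
  assert (Hu := pt_neq_pos _ _ _ _ Hne).
    set (u1 := b1 - a1). set (u2 := b2 - a2).
    set (h := sqrt 3 / 2).
    assert (Hh : h*h = 3/4) by (unfold h; replace (sqrt 3 / 2 * (sqrt 3 / 2)) with (sqrt 3 * sqrt 3 / 4) by field; rewrite sqrt3_sq; field).
    set (pp := ((a1+b1)/2 - h*u2, (a2+b2)/2 + h*u1)).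
    set (pm := ((a1+b1)/2 + h*u2, (a2+b2)/2 - h*u1)).
    assert (Hnot : ~ (forall w, on_circle (a1,a2) (b1,b2) w <-> on_circle (b1,b2) (a1,a2) w)).
    { intro H. destruct (H (b1,b2)) as [H' _]. assert (Hc : on_circle (b1,b2) (a1,a2) (b1,b2)).
      { apply H'. reflexivity. }
      unfold on_circle, dist, nrm, nrm2, psub in Hc; simpl in Hc.
      replace ((b1-b1)*(b1-b1)+(b2-b2)*(b2-b2)) with 0 in Hc by ring. rewrite sqrt_0 in Hc.
      symmetry in Hc. apply sqrt_eq_0 in Hc; [|nra]. nra. }
    assert (Kp : constructible S pp).
    { apply (cons_cc S (a1,a2) (b1,b2) (b1,b2) (a1,a2)); auto;
      unfold on_circle; apply dist_eq; unfold pp, nrm2, psub; simpl; unfold u1, u2 in *; clearbody h; circ_tac h Hh a1 a2 b1 b2. }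
    assert (Km : constructible S pm).
    { apply (cons_cc S (a1,a2) (b1,b2) (b1,b2) (a1,a2)); auto;
      unfold on_circle; apply dist_eq; unfold pm, nrm2, psub; simpl; unfold u1, u2 in *; clearbody h; circ_tac h Hh a1 a2 b1 b2. }
    assert (hpos : 0 < h) by (unfold h; generalize (sqrt_lt_R0 3); lra).
    apply (cons_ll S pp pm (a1,a2) (b1,b2)); auto.
    + unfold pp, pm; intro E; injection E; intros; unfold u1, u2 in *; nra.
    + intro H. destruct (H (a1,a2)) as [_ H']. 
      assert (Hc : on_line pp pm (a1,a2)) by (apply H'; unfold on_line, cross, psub; simpl; ring).
      unfold on_line, cross, psub, pp, pm in Hc; simpl in Hc; unfold u1,u2 in Hc.
      match type of Hc with ?L = _ => assert (E : L = - h * ((b1-a1)*(b1-a1)+(b2-a2)*(b2-a2))) by field end.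
      rewrite E in Hc. nra.
    + unfold on_line, cross, psub, pp, pm; simpl; field.
    + unfold on_line, cross, psub; simpl; field.
Qed.

Lemma k_pg S a b c : constructible S a -> constructible S b -> constructible S c ->
  constructible S (fst a + fst b - fst c, snd a + snd b - snd c).
Proof.
  intros Ha Hb Hc. pose proof (k_refl S c _ Hc (k_mid S a b Ha Hb)) as H. simpl in H.
  replace (2 * ((fst a + fst b)/2) - fst c) with (fst a + fst b - fst c) in H by field.
  replace (2 * ((snd a + snd b)/2) - snd c) with (snd a + snd b - snd c) in H by field.
  exact H.
Qed.

Lemma k_J S a : HS S -> constructible S a -> constructible S (- snd a, fst a).
Proof.
  intros [H0 H1] Ha. destruct a as [a1 a2]; simpl.
  destruct (pt_dec (a1,a2) (0,0)) as [E|Hne].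
  { injection E; intros; subst. replace (-0) with 0 by ring. now apply cons_base. }
  assert (Hu := pt_neq_pos _ _ _ _ Hne). 
  assert (K0 : constructible S (0,0)) by (now apply cons_base).
  assert (Kn : constructible S (-a1,-a2)).
  { pose proof (k_pg S _ _ _ K0 K0 Ha) as H; simpl in H.
    replace (0+0-a1) with (-a1) in H by ring. replace (0+0-a2) with (-a2) in H by ring. exact H. }
  set (q := (- sqrt 3 * a2, sqrt 3 * a1)).
  assert (Kq : constructible S q).
  { apply (cons_cc S (a1,a2) (-a1,-a2) (-a1,-a2) (a1,a2)); auto.
    - intro H. destruct (H (-a1,-a2)) as [H' _].
      assert (Hc : on_circle (-a1,-a2) (a1,a2) (-a1,-a2)) by (apply H'; reflexivity).
      unfold on_circle, dist, nrm, nrm2, psub in Hc; simpl in Hc.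
      replace ((- a1 - - a1) * (- a1 - - a1) + (- a2 - - a2) * (- a2 - - a2)) with 0 in Hc by ring.
      rewrite sqrt_0 in Hc. symmetry in Hc. apply sqrt_eq_0 in Hc; [|nra]. 
      replace (0 - a1) with (-a1) in Hu by ring. replace (0 - a2) with (-a2) in Hu by ring. nra.
    - unfold on_circle; apply dist_eq; unfold q, nrm2, psub; simpl.
      match goal with |- ?L = ?R => assert (E : L - R = (sqrt 3 * sqrt 3 - 3)*(a1*a1+a2*a2)) by ring end.
      rewrite sqrt3_sq in E; lra.
    - unfold on_circle; apply dist_eq; unfold q, nrm2, psub; simpl.
      match goal with |- ?L = ?R => assert (E : L - R = (sqrt 3 * sqrt 3 - 3)*(a1*a1+a2*a2)) by ring end.
      rewrite sqrt3_sq in E; lra. }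
  assert (s3 : 0 < sqrt 3) by (apply sqrt_lt_R0; lra).
  apply (cons_lc S (0,0) q (0,0) (a1,a2)); auto.
  - unfold q; intro E; injection E; intros.
    assert (a1 = 0) by (apply (Rmult_eq_reg_l (sqrt 3)); lra).
    assert (a2 = 0) by (apply (Rmult_eq_reg_l (sqrt 3)); lra). subst. lra.
  - unfold on_line, cross, psub, q; simpl; ring.
  - unfold on_circle; apply dist_eq; unfold nrm2, psub; simpl; ring.
Qed.

Definition cr S r := constructible S (r, 0).

Lemma k_add S a b : constructible S a -> constructible S b -> HS S ->
  constructible S (fst a + fst b, snd a + snd b).
Proof.
  intros Ha Hb [H0 H1]. pose proof (k_pg S a b (0,0) Ha Hb (cons_base _ _ H0)) as H; simpl in H.
  now rewrite !Rminus_0_r in H.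
Qed.

Lemma k_opp S a : constructible S a -> HS S -> constructible S (- fst a, - snd a).
Proof.
  intros Ha [H0 H1]. pose proof (k_pg S (0,0) (0,0) a (cons_base _ _ H0) (cons_base _ _ H0) Ha) as H; simpl in H.
  now rewrite !Rplus_0_l, !Rminus_0_l in H.
Qed.

Lemma k_e2 S : HS S -> constructible S (0,1).
Proof.
  intros HS'. pose proof (k_J S (1,0) HS' (cons_base _ _ (proj2 HS'))) as H; simpl in H.
  now rewrite Ropp_0 in H.
Qed.

Lemma k_proj1 S p : HS S -> constructible S p -> cr S (fst p).
Proof.
  intros HS' Hp. destruct p as [p1 p2]; unfold cr; simpl.
  assert (K2 := k_add S _ _ Hp (k_e2 S HS') HS'); simpl in K2.
  destruct HS' as [H0 H1].
  apply (cons_ll S (0,0) (1,0) (p1,p2) (p1+0, p2+1)); try (now apply cons_base); auto.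
  - intro E; injection E; lra.
  - intro E; injection E; lra.
  - intro H. destruct (H (p1+1, 0)) as [H' _].
    assert (Hc : on_line (p1,p2) (p1+0,p2+1) (p1+1,0)) by (apply H'; unfold on_line, cross, psub; simpl; ring).
    unfold on_line, cross, psub in Hc; simpl in Hc. lra.
  - unfold on_line, cross, psub; simpl; ring.
  - unfold on_line, cross, psub; simpl; ring.
Qed.

Lemma k_proj2 S p : HS S -> constructible S p -> cr S (snd p).
Proof.
  intros HS' Hp. pose proof (k_proj1 S _ HS' (k_opp S _ (k_J S p HS' Hp) HS')) as H.
  simpl in H. now rewrite Ropp_involutive in H.
Qed.

Lemma k_pair S a b : HS S -> cr S a -> cr S b -> constructible S (a, b).
Proof.
  intros HS' Ha Hb. pose proof (k_add S _ _ Ha (k_J S _ HS' Hb) HS') as H; simpl in H.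
  replace (a + - 0) with a in H by ring. now rewrite Rplus_0_l in H.
Qed.

Lemma cr_0 S : HS S -> cr S 0.
Proof. intros [H0 H1]. now apply cons_base. Qed.
Lemma cr_1 S : HS S -> cr S 1.
Proof. intros [H0 H1]. now apply cons_base. Qed.

Lemma cr_add S a b : HS S -> cr S a -> cr S b -> cr S (a + b).
Proof. intros HS' Ha Hb. pose proof (k_add S _ _ Ha Hb HS') as H; simpl in H. now rewrite Rplus_0_l in H. Qed.

Lemma cr_opp S a : HS S -> cr S a -> cr S (- a).
Proof. intros HS' Ha. pose proof (k_opp S _ Ha HS') as H; simpl in H. now rewrite Ropp_0 in H. Qed.

Lemma cr_sub S a b : HS S -> cr S a -> cr S b -> cr S (a - b).
Proof. intros. unfold Rminus. apply cr_add; auto. now apply cr_opp. Qed.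

Lemma cr_mul S r u : HS S -> cr S r -> cr S u -> cr S (r * u).
Proof.
  intros HS' Hr Hu. unfold cr.
  assert (K1 : constructible S (0,u)).
  { pose proof (k_J S _ HS' Hu) as H; simpl in H. now rewrite Ropp_0 in H. }
  assert (K2 : constructible S (r, u-1)) by (apply k_pair; auto; apply cr_sub; auto; apply cr_1; auto).
  destruct HS' as [H0 H1].
  apply (cons_ll S (0,0) (1,0) (0,u) (r,u-1)); try (now apply cons_base); auto.
  - intro E; injection E; lra.
  - intro E; injection E; lra.
  - intro H. destruct (H (r*(u-1), 1)) as [_ H'].
    assert (Hc : on_line (0,0) (1,0) (r*(u-1),1)) by (apply H'; unfold on_line, cross, psub; simpl; ring).
    unfold on_line, cross, psub in Hc; simpl in Hc. lra.
  - unfold on_line, cross, psub; simpl; ring.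
  - unfold on_line, cross, psub; simpl; ring.
Qed.

Lemma cr_inv S r : HS S -> cr S r -> cr S (/ r).
Proof.
  intros HS' Hr. destruct (Req_dec r 0) as [E|Hne].
  { subst. rewrite Rinv_0. now apply cr_0. }
  unfold cr.
  assert (K1 : constructible S (0,1)) by (now apply k_e2).
  assert (K2 : constructible S (1, 1-r)) by (apply k_pair; auto; [apply cr_1; auto | apply cr_sub; auto; apply cr_1; auto]).
  destruct HS' as [H0 H1].
  apply (cons_ll S (0,0) (1,0) (0,1) (1,1-r)); try (now apply cons_base); auto.
  - intro E; injection E; lra.
  - intro E; injection E; lra.
  - intro H. destruct (H (0, 1)) as [_ H'].
    assert (Hc : on_line (0,0) (1,0) (0,1)) by (apply H'; unfold on_line, cross, psub; simpl; ring).
    unfold on_line, cross, psub in Hc; simpl in Hc. lra.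
  - unfold on_line, cross, psub; simpl; ring.
  - unfold on_line, cross, psub; simpl; field; auto.
Qed.

Lemma cr_div S a b : HS S -> cr S a -> cr S b -> cr S (a / b).
Proof. intros. unfold Rdiv. apply cr_mul; auto. now apply cr_inv. Qed.

Lemma cr_sqrt S r : HS S -> cr S r -> cr S (sqrt r).
Proof.
  intros HS' Hr. destruct (Rlt_or_le r 0) as [Hn|Hp].
  { rewrite sqrt_neg_0 by lra. now apply cr_0. }
  assert (Kc : cr S ((r-1)/2)) by (apply cr_div; auto; [apply cr_sub; auto; apply cr_1; auto | replace 2 with (1+1) by ring; apply cr_add; auto; apply cr_1; auto]).
  assert (K : constructible S (0, sqrt r)).
  { destruct HS' as [H0 H1].
    apply (cons_lc S (0,0) (0,1) ((r-1)/2, 0) (r,0)); try (now apply cons_base); auto.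
    - now apply k_e2.
    - intro E; injection E; lra.
    - unfold on_line, cross, psub; simpl; ring.
    - unfold on_circle; apply dist_eq; unfold nrm2, psub; simpl.
      pose proof (sqrt_sqrt r Hp). nra. }
  pose proof (k_opp S _ (k_J S _ HS' K) HS') as H; simpl in H.
  unfold cr. now rewrite Ropp_involutive, Ropp_0 in H.
Qed.

Lemma cr_2 S : HS S -> cr S 2.
Proof. intro H. replace 2 with (1+1) by ring. apply cr_add; auto; apply cr_1; auto. Qed.

Ltac crt H :=
  repeat first [ assumption | apply (cr_0 _ H) | apply (cr_1 _ H) | apply (cr_2 _ H)
    | apply (cr_sub _ _ _ H) | apply (cr_add _ _ _ H) | apply (cr_div _ _ _ H) | apply (cr_mul _ _ _ H)
    | apply (cr_opp _ _ H) | apply (cr_inv _ _ H) | apply (cr_sqrt _ _ H) ].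

Lemma arc_core u1 u2 v1 v2 w1 w2 c1 c2 r :
  0 < r ->
  u1*u1+u2*u2 = r*r -> v1*v1+v2*v2 = r*r -> w1*w1+w2*w2 = r*r ->
  (u1 <> v1 \/ u2 <> v2) ->
  c1*u1+c2*u2 < -(r*r) -> c1*v1+c2*v2 < -(r*r) ->
  (u1*v2-u2*v1) <> 0 ->
  ((v1-u1)*(w2-u2)-(v2-u2)*(w1-u1)) * (u1*v2-u2*v1) <= 0 ->
  c1*w1+c2*w2 < -(r*r).
Proof.
  intros hr hu hv hw hne hcu hcv hK hS.
  set (K := u1*v2-u2*v1) in *.
  set (A := (w1*v2-w2*v1)*K). set (B := (u1*w2-u2*w1)*K).
  assert (I1 : K*K*w1 = A*u1 + B*v1) by (unfold A, B, K; ring).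
  assert (I2 : K*K*w2 = A*u2 + B*v2) by (unfold A, B, K; ring).
  assert (HS : A + B >= K*K).
  { assert (E : ((v1-u1)*(w2-u2)-(v2-u2)*(w1-u1)) * K = K*K - A - B) by (unfold A, B, K; ring). lra. }
  assert (KK : 0 < K*K) by (apply Rsqr_pos_lt; exact hK).
  assert (Huv : 0 < r*r - (u1*v1+u2*v2)).
  { assert (E : r*r - (u1*v1+u2*v2) = ((u1-v1)*(u1-v1)+(u2-v2)*(u2-v2))/2) by lra.
    rewrite E. destruct hne as [h|h].
    - assert (0 < (u1-v1)*(u1-v1)) by (apply Rsqr_pos_lt; lra).
      pose proof (Rle_0_sqr (u2-v2)); unfold Rsqr in *; lra.
    - assert (0 < (u2-v2)*(u2-v2)) by (apply Rsqr_pos_lt; lra).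
      pose proof (Rle_0_sqr (u1-v1)); unfold Rsqr in *; lra. }
  assert (Enorm : (K*K)*(K*K)*(r*r) = r*r*(A*A+B*B) + 2*A*B*(u1*v1+u2*v2)).
  { assert (E : (K*K*w1)*(K*K*w1)+(K*K*w2)*(K*K*w2) = (K*K)*(K*K)*(w1*w1+w2*w2)) by ring.
    assert (E' : (A*u1+B*v1)*(A*u1+B*v1)+(A*u2+B*v2)*(A*u2+B*v2) = A*A*(u1*u1+u2*u2)+B*B*(v1*v1+v2*v2)+2*A*B*(u1*v1+u2*v2)) by ring.
    rewrite I1, I2, hw in E. rewrite hu, hv in E'. rewrite E' in E. lra. }
  assert (E2 : 2*A*B*(r*r - (u1*v1+u2*v2)) = r*r*((A+B)*(A+B) - (K*K)*(K*K))).
  { assert (E : (A+B)*(A+B) = A*A+B*B+2*A*B) by ring. rewrite E.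
    assert (E3 : 2*A*B*(r*r - (u1*v1+u2*v2)) = 2*A*B*(r*r) - 2*A*B*(u1*v1+u2*v2)) by ring.
    rewrite E3. lra. }
  assert (G : (A+B)*(A+B) - (K*K)*(K*K) >= 0).
  { assert (0 <= A + B - K*K) by lra. assert (0 <= A + B + K*K) by lra.
    assert (E : (A+B)*(A+B) - (K*K)*(K*K) = (A+B-K*K)*(A+B+K*K)) by ring. rewrite E.
    apply Rle_ge, Rmult_le_pos; lra. }
  assert (AB : 0 <= A*B).
  { assert (0 <= r*r*((A+B)*(A+B) - (K*K)*(K*K))) by (apply Rmult_le_pos; nra).
    rewrite <- E2 in H.
    destruct (Rlt_or_le (A*B) 0) as [h|h]; auto.
    assert (2*A*B*(r*r - (u1*v1+u2*v2)) < 0).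
    { replace (2*A*B*(r*r - (u1*v1+u2*v2))) with ((A*B)*(2*(r*r - (u1*v1+u2*v2)))) by ring.
      apply Rmult_neg_pos; lra. }
    lra. }
  assert (Ap : 0 <= A /\ 0 <= B).
  { destruct (Rlt_or_le A 0) as [h|h].
    - destruct (Rlt_or_le B 0) as [h'|h']. { lra. }
      destruct (Req_dec B 0) as [e|e]. { lra. }
      assert (A*B < 0) by (apply Rmult_neg_pos; lra). lra.
    - split; auto. destruct (Rlt_or_le B 0) as [h'|h']; auto.
      destruct (Req_dec A 0) as [e|e]. { lra. }
      assert (A*B < 0). { rewrite Rmult_comm. apply Rmult_neg_pos; lra. } lra. }
  destruct Ap as [Ap Bp].
  assert (T : K*K*(c1*w1+c2*w2) = A*(c1*u1+c2*u2) + B*(c1*v1+c2*v2)).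
  { replace (K*K*(c1*w1+c2*w2)) with (c1*(K*K*w1) + c2*(K*K*w2)) by ring. rewrite I1, I2. ring. }
  assert (X1 : A*(c1*u1+c2*u2 + r*r) <= 0).
  { destruct (Req_dec A 0) as [e|e]. { rewrite e; lra. } apply Rlt_le. apply Rmult_pos_neg; lra. }
  assert (X2 : B*(c1*v1+c2*v2 + r*r) <= 0).
  { destruct (Req_dec B 0) as [e|e]. { rewrite e; lra. } apply Rlt_le. apply Rmult_pos_neg; lra. }
  assert (X3 : A*(c1*u1+c2*u2 + r*r) + B*(c1*v1+c2*v2 + r*r) < 0).
  { destruct (Req_dec A 0) as [e|e].
    - assert (0 < B) by lra. assert (B*(c1*v1+c2*v2 + r*r) < 0) by (apply Rmult_pos_neg; lra). lra.
    - assert (0 < A) by lra. assert (A*(c1*u1+c2*u2 + r*r) < 0) by (apply Rmult_pos_neg; lra). lra. }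
  assert (X4 : K*K*(c1*w1+c2*w2 + r*r) < 0).
  { assert (E : K*K*(c1*w1+c2*w2 + r*r) = A*(c1*u1+c2*u2 + r*r) + B*(c1*v1+c2*v2 + r*r) - r*r*(A+B - K*K)) by (rewrite <- (Rplus_0_r (K*K*(c1*w1+c2*w2 + r*r))); rewrite Rmult_plus_distr_l, T; ring).
    rewrite E. assert (0 <= r*r*(A+B-K*K)) by (apply Rmult_le_pos; nra). lra. }
  assert (c1*w1+c2*w2 + r*r < 0).
  { destruct (Rlt_or_le (c1*w1+c2*w2 + r*r) 0) as [h|h]; auto.
    assert (0 <= K*K*(c1*w1+c2*w2 + r*r)) by (apply Rmult_le_pos; lra). lra. }
  lra.
Qed.

Lemma sumsq0 a b : a*a + b*b = 0 -> a = 0 /\ b = 0.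
Proof.
  intro H. pose proof (Rle_0_sqr a); pose proof (Rle_0_sqr b); unfold Rsqr in *.
  assert (a*a = 0) by lra. assert (b*b = 0) by lra. split; nra.
Qed.

Lemma arc_coord x1 x2 y1 y2 m1 m2 c1 c2 r :
  x1*x1+x2*x2 < 1 -> y1*y1+y2*y2 < 1 -> (x1 <> y1 \/ x2 <> y2) -> 0 < r ->
  c1*c1+c2*c2 = 1 + r*r ->
  (x1-c1)*(x1-c1)+(x2-c2)*(x2-c2) = r*r ->
  (y1-c1)*(y1-c1)+(y2-c2)*(y2-c2) = r*r ->
  (m1-c1)*(m1-c1)+(m2-c2)*(m2-c2) = r*r ->
  ((y1-x1)*(m2-x2)-(y2-x2)*(m1-x1)) * ((y1-x1)*(c2-x2)-(y2-x2)*(c1-x1)) <= 0 ->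
  m1*m1+m2*m2 < 1.
Proof.
  intros hx hy hne hr hc hu hv hw hS.
  assert (cu : c1*(x1-c1)+c2*(x2-c2) < -(r*r)).
  { assert (E : x1*x1+x2*x2 = (c1*c1+c2*c2) + 2*(c1*(x1-c1)+c2*(x2-c2)) + ((x1-c1)*(x1-c1)+(x2-c2)*(x2-c2))) by ring.
    rewrite hc, hu in E. lra. }
  assert (cv : c1*(y1-c1)+c2*(y2-c2) < -(r*r)).
  { assert (E : y1*y1+y2*y2 = (c1*c1+c2*c2) + 2*(c1*(y1-c1)+c2*(y2-c2)) + ((y1-c1)*(y1-c1)+(y2-c2)*(y2-c2))) by ring.
    rewrite hc, hv in E. lra. }
  assert (hK : (x1-c1)*(y2-c2)-(x2-c2)*(y1-c1) <> 0).
  { intro K0.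
    set (u1 := x1-c1) in *. set (u2 := x2-c2) in *. set (v1 := y1-c1) in *. set (v2 := y2-c2) in *.
    assert (E : ((u1+v1)*(u1+v1)+(u2+v2)*(u2+v2))*((u1-v1)*(u1-v1)+(u2-v2)*(u2-v2))
                = 4*((u1*v2-u2*v1)*(u1*v2-u2*v1))).
    { assert (E1 : ((u1+v1)*(u1+v1)+(u2+v2)*(u2+v2))*((u1-v1)*(u1-v1)+(u2-v2)*(u2-v2))
        = ((u1*u1+u2*u2)+(v1*v1+v2*v2))*((u1*u1+u2*u2)+(v1*v1+v2*v2)) - 4*(u1*v1+u2*v2)*(u1*v1+u2*v2)) by ring.
      assert (E2 : (u1*v2-u2*v1)*(u1*v2-u2*v1) = (u1*u1+u2*u2)*(v1*v1+v2*v2) - (u1*v1+u2*v2)*(u1*v1+u2*v2)) by ring.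
      rewrite E1, E2, hu, hv. ring. }
    rewrite K0, Rmult_0_l, Rmult_0_r in E.
    assert (P : 0 < (u1-v1)*(u1-v1)+(u2-v2)*(u2-v2)).
    { destruct hne as [h|h].
      - assert (0 < (u1-v1)*(u1-v1)) by (apply Rsqr_pos_lt; unfold u1, v1; lra).
        pose proof (Rle_0_sqr (u2-v2)); unfold Rsqr in *; lra.
      - assert (0 < (u2-v2)*(u2-v2)) by (apply Rsqr_pos_lt; unfold u2, v2; lra).
        pose proof (Rle_0_sqr (u1-v1)); unfold Rsqr in *; lra. }
    apply Rmult_integral in E. destruct E as [E|E]; [|lra].
    apply sumsq0 in E. destruct E as [E1 E2]. unfold u1, u2, v1, v2 in *.
    assert (c1 = (x1+y1)/2) by lra. assert (c2 = (x2+y2)/2) by lra. subst c1 c2.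
    pose proof (Rle_0_sqr (x1-y1)); pose proof (Rle_0_sqr (x2-y2)); unfold Rsqr in *.
    assert (0 <= r*r) by nra.
    assert (E3 : (x1+y1)/2*((x1+y1)/2) + (x2+y2)/2*((x2+y2)/2) = ((x1*x1+x2*x2)+(y1*y1+y2*y2))/2 - ((x1-y1)*(x1-y1)+(x2-y2)*(x2-y2))/4) by field.
    lra. }
  assert (Hw := arc_core (x1-c1) (x2-c2) (y1-c1) (y2-c2) (m1-c1) (m2-c2) c1 c2 r hr hu hv hw).
  assert (cw : c1*(m1-c1)+c2*(m2-c2) < -(r*r)).
  { apply Hw; auto.
    - destruct hne; [left|right]; lra.
    - replace ((y1 - c1 - (x1 - c1)) * (m2 - c2 - (x2 - c2)) - (y2 - c2 - (x2 - c2)) * (m1 - c1 - (x1 - c1)))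
        with ((y1-x1)*(m2-x2)-(y2-x2)*(m1-x1)) by ring.
      replace ((x1 - c1) * (y2 - c2) - (x2 - c2) * (y1 - c1)) with ((y1-x1)*(c2-x2)-(y2-x2)*(c1-x1)) by ring.
      exact hS. }
  assert (E : m1*m1+m2*m2 = (c1*c1+c2*c2) + 2*(c1*(m1-c1)+c2*(m2-c2)) + ((m1-c1)*(m1-c1)+(m2-c2)*(m2-c2))) by ring.
  rewrite hc, hw in E. lra.
Qed.

Definition sq2 u1 u2 := u1*u1+u2*u2.
Definition mD x1 x2 y1 y2 := 1 - sq2 x1 x2 * sq2 y1 y2 +
  sqrt (sq2 (x1-y1) (x2-y2) + (1 - sq2 y1 y2)*(1 - sq2 x1 x2)) * sqrt ((1 - sq2 y1 y2)*(1 - sq2 x1 x2)).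
Definition mMc x1 x2 y1 y2 xi yi := (1 - sq2 y1 y2)*xi + (1 - sq2 x1 x2)*yi.

Lemma sumsq0_ a b : a*a + b*b = 0 -> a = 0 /\ b = 0.
Proof.
  intro H. pose proof (Rle_0_sqr a); pose proof (Rle_0_sqr b); unfold Rsqr in *.
  assert (a*a = 0) by lra. assert (b*b = 0) by lra. split; nra.
Qed.

Lemma sq2_ge0 u1 u2 : 0 <= sq2 u1 u2.
Proof. unfold sq2. pose proof (Rle_0_sqr u1); pose proof (Rle_0_sqr u2); unfold Rsqr in *; lra. Qed.

Lemma mid_facts x1 x2 y1 y2 : sq2 x1 x2 < 1 -> sq2 y1 y2 < 1 ->
  exists P A, P*P = (1-sq2 y1 y2)*(1-sq2 x1 x2) /\ 0 < P /\
    A*A = sq2 (x1-y1) (x2-y2) + (1-sq2 y1 y2)*(1-sq2 x1 x2) /\ P <= A /\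
    mD x1 x2 y1 y2 = 1 - sq2 x1 x2 * sq2 y1 y2 + A*P.
Proof.
  intros hx hy.
  assert (st : 0 < (1-sq2 y1 y2)*(1-sq2 x1 x2)) by (apply Rmult_lt_0_compat; lra).
  pose proof (sq2_ge0 (x1-y1) (x2-y2)).
  exists (sqrt ((1-sq2 y1 y2)*(1-sq2 x1 x2))), (sqrt (sq2 (x1-y1) (x2-y2) + (1-sq2 y1 y2)*(1-sq2 x1 x2))).
  repeat split.
  - apply sqrt_sqrt; lra.
  - apply sqrt_lt_R0; lra.
  - apply sqrt_sqrt; lra.
  - apply sqrt_le_1_alt; lra.
Qed.

Lemma mD_sym x1 x2 y1 y2 : mD y1 y2 x1 x2 = mD x1 x2 y1 y2.
Proof.
  unfold mD. rewrite (Rmult_comm (sq2 y1 y2)), (Rmult_comm (1 - sq2 x1 x2)).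
  replace (sq2 (y1-x1) (y2-x2)) with (sq2 (x1-y1) (x2-y2)) by (unfold sq2; ring). reflexivity.
Qed.

Lemma mMc_sym x1 x2 y1 y2 xi yi : mMc y1 y2 x1 x2 yi xi = mMc x1 x2 y1 y2 xi yi.
Proof. unfold mMc. ring. Qed.

Lemma id1 (x1 x2 y1 y2 P A : R) :
  let a := x1*x1+x2*x2 in let b := y1*y1+y2*y2 in let s := 1 - b in let t := 1 - a in
  P*P = s*t -> A*A = (x1-y1)*(x1-y1)+(x2-y2)*(x2-y2) + s*t ->
  let D := 1 - a*b + A*P in
  let M1 := s*x1+t*y1 in let M2 := s*x2+t*y2 in
  s*((D*x1-M1)*(D*x1-M1)+(D*x2-M2)*(D*x2-M2)) = t*((D*y1-M1)*(D*y1-M1)+(D*y2-M2)*(D*y2-M2)).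
Proof. intros a b s t HP HA D M1 M2. unfold D, M1, M2, s, t, a, b in *. nsatz. Qed.

Lemma id2 (x1 x2 y1 y2 P A : R) :
  let a := x1*x1+x2*x2 in let b := y1*y1+y2*y2 in let s := 1 - b in let t := 1 - a in
  P*P = s*t -> A*A = (x1-y1)*(x1-y1)+(x2-y2)*(x2-y2) + s*t ->
  let D := 1 - a*b + A*P in
  let M1 := s*x1+t*y1 in let M2 := s*x2+t*y2 in
  D*(s*(1+a)+t*(1+b)) = M1*M1+M2*M2 + D*D.
Proof. intros a b s t HP HA D M1 M2. unfold D, M1, M2, s, t, a, b in *. nsatz. Qed.

Lemma D_pos x1 x2 y1 y2 : sq2 x1 x2 < 1 -> sq2 y1 y2 < 1 -> 0 < mD x1 x2 y1 y2.
Proof.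
  intros hx hy. destruct (mid_facts x1 x2 y1 y2 hx hy) as (P & A & hP & P0 & hA & PA & ->).
  pose proof (sq2_ge0 x1 x2); pose proof (sq2_ge0 y1 y2).
  assert (sq2 x1 x2 * sq2 y1 y2 < 1).
  { destruct (Req_dec (sq2 y1 y2) 0) as [e|e]. { rewrite e; lra. }
    apply Rle_lt_trans with (1 * sq2 y1 y2). apply Rmult_le_compat_r; lra. lra. }
  assert (0 <= A*P) by (apply Rmult_le_pos; lra). lra.
Qed.

Lemma mid_apol x1 x2 y1 y2 : sq2 x1 x2 < 1 -> sq2 y1 y2 < 1 ->
  let D := mD x1 x2 y1 y2 in
  let m1 := mMc x1 x2 y1 y2 x1 y1 / D in let m2 := mMc x1 x2 y1 y2 x2 y2 / D in
  (1 - sq2 y1 y2) * ((x1-m1)*(x1-m1)+(x2-m2)*(x2-m2)) = (1 - sq2 x1 x2) * ((y1-m1)*(y1-m1)+(y2-m2)*(y2-m2)).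
Proof.
  intros hx hy D m1 m2. pose proof (D_pos _ _ _ _ hx hy) as Dp. fold D in Dp.
  destruct (mid_facts x1 x2 y1 y2 hx hy) as (P & A & hP & P0 & hA & PA & ED).
  pose proof (id1 x1 x2 y1 y2 P A hP hA) as I. cbv zeta in I. unfold sq2, mMc in *.
  rewrite <- ED in I. fold D in I. unfold m1, m2.
  set (M1 := (1 - (y1 * y1 + y2 * y2)) * x1 + (1 - (x1 * x1 + x2 * x2)) * y1) in *.
  set (M2 := (1 - (y1 * y1 + y2 * y2)) * x2 + (1 - (x1 * x1 + x2 * x2)) * y2) in *.
  assert (Dn : D <> 0) by lra.
  assert (E1 : forall z1 z2, (z1 - M1/D)*(z1-M1/D) + (z2 - M2/D)*(z2-M2/D) = ((D*z1-M1)*(D*z1-M1)+(D*z2-M2)*(D*z2-M2)) / (D*D)).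
  { intros. field. exact Dn. }
  rewrite !E1. unfold Rdiv. rewrite <- !Rmult_assoc. rewrite I. reflexivity.
Qed.

Lemma mid_arc x1 x2 y1 y2 : sq2 x1 x2 < 1 -> sq2 y1 y2 < 1 -> x1*y2 - x2*y1 <> 0 ->
  let k := x1*y2 - x2*y1 in
  let c1 := ((1+sq2 x1 x2)/2*y2 - (1+sq2 y1 y2)/2*x2)/k in
  let c2 := ((1+sq2 y1 y2)/2*x1 - (1+sq2 x1 x2)/2*y1)/k in
  let D := mD x1 x2 y1 y2 in
  let m1 := mMc x1 x2 y1 y2 x1 y1 / D in let m2 := mMc x1 x2 y1 y2 x2 y2 / D in
  0 < sq2 c1 c2 - 1 /\
  sq2 (x1-c1) (x2-c2) = sq2 c1 c2 - 1 /\
  sq2 (y1-c1) (y2-c2) = sq2 c1 c2 - 1 /\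
  sq2 (m1-c1) (m2-c2) = sq2 c1 c2 - 1 /\
  ((y1-x1)*(m2-x2)-(y2-x2)*(m1-x1)) * ((y1-x1)*(c2-x2)-(y2-x2)*(c1-x1)) <= 0.
Proof.
  intros hx hy hk k c1 c2 D m1 m2. pose proof (D_pos _ _ _ _ hx hy) as Dp. fold D in Dp.
  destruct (mid_facts x1 x2 y1 y2 hx hy) as (P & A & hP & P0 & hA & PA & ED).
  fold D in ED.
  assert (cx : c1*x1+c2*x2 = (1+sq2 x1 x2)/2) by (unfold c1, c2, k in *; field; exact hk).
  assert (cy : c1*y1+c2*y2 = (1+sq2 y1 y2)/2) by (unfold c1, c2, k in *; field; exact hk).
  assert (Ex : sq2 (x1-c1) (x2-c2) = sq2 c1 c2 - 1).
  { replace (sq2 (x1-c1) (x2-c2)) with (sq2 x1 x2 - 2*(c1*x1+c2*x2) + sq2 c1 c2) by (unfold sq2; ring).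
    rewrite cx. field. }
  assert (Ey : sq2 (y1-c1) (y2-c2) = sq2 c1 c2 - 1).
  { replace (sq2 (y1-c1) (y2-c2)) with (sq2 y1 y2 - 2*(c1*y1+c2*y2) + sq2 c1 c2) by (unfold sq2; ring).
    rewrite cy. field. }
  split; [|split; [exact Ex|split; [exact Ey|split]]].
  - rewrite <- Ex. destruct (Req_dec (sq2 (x1-c1) (x2-c2)) 0) as [e|e].
    + exfalso. unfold sq2 in e. apply sumsq0_ in e. destruct e as [e1 e2].
      assert (c1 = x1) by lra. assert (c2 = x2) by lra. rewrite H, H0 in cx. unfold sq2 in *. lra.
    + pose proof (sq2_ge0 (x1-c1) (x2-c2)). lra.
  - pose proof (id2 x1 x2 y1 y2 P A hP hA) as I. cbv zeta in I. unfold sq2, mMc in *.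
    rewrite <- ED in I. unfold m1, m2, mMc, sq2.
    set (M1 := (1 - (y1 * y1 + y2 * y2)) * x1 + (1 - (x1 * x1 + x2 * x2)) * y1) in *.
    set (M2 := (1 - (y1 * y1 + y2 * y2)) * x2 + (1 - (x1 * x1 + x2 * x2)) * y2) in *.
    assert (cM : 2*(c1*M1+c2*M2) = (1 - (y1 * y1 + y2 * y2))*(1+(x1*x1+x2*x2)) + (1 - (x1 * x1 + x2 * x2))*(1+(y1*y1+y2*y2))).
    { unfold M1, M2. replace (2*(c1 * ((1 - (y1 * y1 + y2 * y2)) * x1 + (1 - (x1 * x1 + x2 * x2)) * y1) +
         c2 * ((1 - (y1 * y1 + y2 * y2)) * x2 + (1 - (x1 * x1 + x2 * x2)) * y2)))
       with (2*((1 - (y1 * y1 + y2 * y2))*(c1*x1+c2*x2) + (1 - (x1 * x1 + x2 * x2))*(c1*y1+c2*y2))) by ring.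
      rewrite cx, cy. field. }
    assert (Dn : D <> 0) by lra.
    assert (E : (M1/D - c1)*(M1/D-c1) + (M2/D-c2)*(M2/D-c2) - (c1*c1+c2*c2-1) = ((M1*M1+M2*M2+D*D) - D*(2*(c1*M1+c2*M2)))/(D*D)).
    { field. exact Dn. }
    rewrite cM, <- I in E.
    replace (D * ((1 - (y1 * y1 + y2 * y2)) * (1 + (x1 * x1 + x2 * x2)) + (1 - (x1 * x1 + x2 * x2)) * (1 + (y1 * y1 + y2 * y2))) -
      D * ((1 - (y1 * y1 + y2 * y2)) * (1 + (x1 * x1 + x2 * x2)) + (1 - (x1 * x1 + x2 * x2)) * (1 + (y1 * y1 + y2 * y2)))) with 0 in E by ring.
    unfold Rdiv in E. rewrite Rmult_0_l in E. unfold Rdiv. lra.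
  - assert (Dn : D <> 0) by lra.
    assert (S1 : (y1-x1)*(m2-x2)-(y2-x2)*(m1-x1) = (D - (1-sq2 y1 y2) - (1 - sq2 x1 x2))*k/D).
    { unfold m1, m2, mMc, k, sq2. field. exact Dn. }
    assert (S2 : (y1-x1)*(c2-x2)-(y2-x2)*(c1-x1) = -((1-(x1*y1+x2*y2))*sq2 (x1-y1) (x2-y2))/(2*k)).
    { unfold c1, c2, k, sq2. field. exact hk. }
    rewrite S1, S2.
    assert (E : (D - (1 - sq2 y1 y2) - (1 - sq2 x1 x2)) * k / D * (- ((1 - (x1 * y1 + x2 * y2)) * sq2 (x1 - y1) (x2 - y2)) / (2 * k))
       = - ((D - (1 - sq2 y1 y2) - (1 - sq2 x1 x2)) * ((1 - (x1 * y1 + x2 * y2)) * sq2 (x1 - y1) (x2 - y2))) / (2*D)).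
    { field. split; assumption. }
    rewrite E.
    assert (F1 : 0 <= D - (1 - sq2 y1 y2) - (1 - sq2 x1 x2)).
    { rewrite ED. assert (E' : 1 - sq2 x1 x2 * sq2 y1 y2 + A * P - (1 - sq2 y1 y2) - (1 - sq2 x1 x2) = P*(A-P)).
      { rewrite Rmult_minus_distr_l, hP. ring. }
      rewrite E'. apply Rmult_le_pos; lra. }
    assert (F2 : 0 < 1 - (x1*y1+x2*y2)).
    { pose proof (sq2_ge0 (x1-y1) (x2-y2)). unfold sq2 in *. nra. }
    pose proof (sq2_ge0 (x1-y1) (x2-y2)).
    assert (0 <= (D - (1 - sq2 y1 y2) - (1 - sq2 x1 x2)) * ((1 - (x1 * y1 + x2 * y2)) * sq2 (x1 - y1) (x2 - y2))).
    { apply Rmult_le_pos; auto. apply Rmult_le_pos; lra. }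
    unfold Rdiv. rewrite Ropp_mult_distr_l_reverse.
    match goal with H : 0 <= ?X |- - (?X * ?Y) <= 0 => assert (0 <= X * Y) by (apply Rmult_le_pos; [exact H | left; apply Rinv_0_lt_compat; lra]) end.
    lra.
Qed.

Lemma sq_ge_ge X Y : 0 <= X -> 0 <= Y -> Y*Y <= X*X -> Y <= X.
Proof. intros. destruct (Rlt_or_le X Y); auto. nra. Qed.
Lemma coll_core a b g t s P d :
  0 <= a -> 0 <= b -> g*g = a*b -> 0 < t -> 0 < s -> t = 1 - a -> s = 1 - b ->
  P*P = s*t -> 0 <= P -> d = a + b - 2*g -> 0 < d ->
  0 <= t*(b-g) + (a-g)*P.
Proof.
  intros ha hb hg ht hs et es hP hP0 ed hd.
  assert (Ea : (a-g)*(a-g) = a*d) by (subst d; nra).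
  assert (Eb : (b-g)*(b-g) = b*d) by (subst d; nra).
  destruct (Rlt_or_le (b-g) 0) as [h1|h1].
  - assert (hg0 : b < g) by lra.
    assert (ab : b < a).
    { destruct (Req_dec b 0) as [e|e].
      - subst b. rewrite Rmult_0_r in hg. assert (g = 0) by nra. lra.
      - assert (0 < b) by lra. assert (b*b < g*g) by nra. nra. }
    assert (0 < a - g) by lra.
    assert (t*(g-b) <= (a-g)*P).
    { apply sq_ge_ge. apply Rmult_le_pos; lra. apply Rmult_le_pos; lra.
      assert (E : (a-g)*P*((a-g)*P) - t*(g-b)*(t*(g-b)) = d*t*(a-b)).
      { replace ((a-g)*P*((a-g)*P)) with ((a-g)*(a-g)*(P*P)) by ring.
        replace (t*(g-b)*(t*(g-b))) with (t*t*((b-g)*(b-g))) by ring.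
        rewrite Ea, Eb, hP, et, es. ring. }
      assert (0 <= d*t*(a-b)) by (apply Rmult_le_pos; [apply Rmult_le_pos|]; lra). lra. }
    lra.
  - destruct (Rlt_or_le (a-g) 0) as [h2|h2].
    + assert (ab : a < b).
      { destruct (Req_dec a 0) as [e|e].
        - subst a. rewrite Rmult_0_l in hg. assert (g = 0) by nra. lra.
        - assert (0 < a) by lra. assert (a*a < g*g) by nra. nra. }
      assert ((g-a)*P <= t*(b-g)).
      { apply sq_ge_ge. apply Rmult_le_pos; lra. apply Rmult_le_pos; lra.
        assert (E : t*(b-g)*(t*(b-g)) - (g-a)*P*((g-a)*P) = d*t*(b-a)).
        { replace ((g-a)*P*((g-a)*P)) with ((a-g)*(a-g)*(P*P)) by ring.
          replace (t*(b-g)*(t*(b-g))) with (t*t*((b-g)*(b-g))) by ring.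
          rewrite Ea, Eb, hP, et, es. ring. }
        assert (0 <= d*t*(b-a)) by (apply Rmult_le_pos; [apply Rmult_le_pos|]; lra). lra. }
      lra.
    + assert (0 <= t*(b-g)) by (apply Rmult_le_pos; lra).
      assert (0 <= (a-g)*P) by (apply Rmult_le_pos; lra). lra.
Qed.

Lemma coll_nonneg x1 x2 y1 y2 : sq2 x1 x2 < 1 -> sq2 y1 y2 < 1 -> (x1 <> y1 \/ x2 <> y2) ->
  x1*y2 - x2*y1 = 0 ->
  0 <= (mMc x1 x2 y1 y2 x1 y1 - mD x1 x2 y1 y2 * x1)*(y1-x1) + (mMc x1 x2 y1 y2 x2 y2 - mD x1 x2 y1 y2 * x2)*(y2-x2).
Proof.
  intros hx hy hne hk.
  destruct (mid_facts x1 x2 y1 y2 hx hy) as (P & A & hP & P0 & hA & PA & ED).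
  rewrite ED. unfold mMc.
  set (a := sq2 x1 x2) in *. set (b := sq2 y1 y2) in *. set (g := x1*y1+x2*y2).
  assert (hg : g*g = a*b).
  { assert (E : (x1*y2 - x2*y1)*(x1*y2 - x2*y1) = a*b - g*g) by (unfold a, b, g, sq2; ring).
    rewrite hk, Rmult_0_l in E. lra. }
  assert (hd : 0 < sq2 (x1-y1) (x2-y2)).
  { unfold sq2. destruct hne as [h|h].
    - assert (0 < (x1-y1)*(x1-y1)) by (apply Rsqr_pos_lt; lra).
      pose proof (Rle_0_sqr (x2-y2)); unfold Rsqr in *; lra.
    - assert (0 < (x2-y2)*(x2-y2)) by (apply Rsqr_pos_lt; lra).
      pose proof (Rle_0_sqr (x1-y1)); unfold Rsqr in *; lra. }
  assert (Ed : sq2 (x1-y1) (x2-y2) = a + b - 2*g) by (unfold a, b, g, sq2; ring).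
  assert (ha : 0 <= a) by apply sq2_ge0. assert (hb : 0 <= b) by apply sq2_ge0.
  assert (g1 : 0 < 1 - g) by lra.
  assert (EA : A = 1 - g).
  { assert (E : A*A = (1-g)*(1-g)).
    { rewrite hA, Ed. replace ((1-b)*(1-a)) with (1 - a - b + a*b) by ring. rewrite <- hg. ring. }
    apply Rle_antisym; apply sq_ge_ge; lra. }
  subst A.
  assert (E : ((1 - b) * x1 + (1 - a) * y1 - (1 - a * b + (1 - g) * P) * x1) * (y1 - x1) +
    ((1 - b) * x2 + (1 - a) * y2 - (1 - a * b + (1 - g) * P) * x2) * (y2 - x2)
    = (1-g)*((1-a)*(b-g) + (a-g)*P) + (1-a)*(a*b - g*g)).
  { unfold a, b, g, sq2. ring. }
  rewrite E, <- hg. replace (g*g - g*g) with 0 by ring. rewrite Rmult_0_r, Rplus_0_r.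
  apply Rmult_le_pos; [lra|].
  apply (coll_core a b g (1-a) (1-b) P (sq2 (x1-y1) (x2-y2))); auto; lra.
Qed.

Lemma mid_coll x1 x2 y1 y2 : sq2 x1 x2 < 1 -> sq2 y1 y2 < 1 -> (x1 <> y1 \/ x2 <> y2) ->
  x1*y2 - x2*y1 = 0 ->
  let D := mD x1 x2 y1 y2 in
  let m1 := mMc x1 x2 y1 y2 x1 y1 / D in let m2 := mMc x1 x2 y1 y2 x2 y2 / D in
  exists tau, 0 <= tau <= 1 /\ m1 = x1 + tau*(y1-x1) /\ m2 = x2 + tau*(y2-x2).
Proof.
  intros hx hy hne hk D m1 m2. pose proof (D_pos _ _ _ _ hx hy) as Dp. fold D in Dp.
  assert (Dn : D <> 0) by lra.
  assert (hd : 0 < sq2 (y1-x1) (y2-x2)).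
  { unfold sq2. destruct hne as [h|h].
    - assert (0 < (y1-x1)*(y1-x1)) by (apply Rsqr_pos_lt; lra).
      pose proof (Rle_0_sqr (y2-x2)); unfold Rsqr in *; lra.
    - assert (0 < (y2-x2)*(y2-x2)) by (apply Rsqr_pos_lt; lra).
      pose proof (Rle_0_sqr (y1-x1)); unfold Rsqr in *; lra. }
  assert (S1 : (y1-x1)*(m2-x2)-(y2-x2)*(m1-x1) = 0).
  { replace ((y1-x1)*(m2-x2)-(y2-x2)*(m1-x1)) with ((D - (1-sq2 y1 y2) - (1 - sq2 x1 x2))*(x1*y2 - x2*y1)/D)
      by (unfold m1, m2, mMc, sq2; field; exact Dn).
    rewrite hk. unfold Rdiv. ring. }
  exists (((m1-x1)*(y1-x1)+(m2-x2)*(y2-x2))/sq2 (y1-x1) (y2-x2)).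
  assert (N1 : 0 <= (m1-x1)*(y1-x1)+(m2-x2)*(y2-x2)).
  { pose proof (coll_nonneg x1 x2 y1 y2 hx hy hne hk) as H. fold D in H.
    replace ((m1-x1)*(y1-x1)+(m2-x2)*(y2-x2)) with
      (((mMc x1 x2 y1 y2 x1 y1 - D * x1) * (y1 - x1) + (mMc x1 x2 y1 y2 x2 y2 - D * x2) * (y2 - x2)) / D)
      by (unfold m1, m2; field; exact Dn).
    apply Rmult_le_pos; [exact H | left; apply Rinv_0_lt_compat; lra]. }
  assert (N2 : 0 <= (y1-m1)*(y1-x1)+(y2-m2)*(y2-x2)).
  { assert (hne' : y1 <> x1 \/ y2 <> x2) by (destruct hne; [left|right]; auto).
    assert (hk' : y1*x2 - y2*x1 = 0) by lra.
    pose proof (coll_nonneg y1 y2 x1 x2 hy hx hne' hk') as H. rewrite mD_sym in H. fold D in H.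
    rewrite (mMc_sym x1 x2 y1 y2 x1 y1), (mMc_sym x1 x2 y1 y2 x2 y2) in H.
    replace ((y1-m1)*(y1-x1)+(y2-m2)*(y2-x2)) with
      (((mMc x1 x2 y1 y2 x1 y1 - D * y1) * (x1 - y1) + (mMc x1 x2 y1 y2 x2 y2 - D * y2) * (x2 - y2)) / D)
      by (unfold m1, m2; field; exact Dn).
    apply Rmult_le_pos; [exact H | left; apply Rinv_0_lt_compat; lra]. }
  assert (Hs : sq2 (y1-x1) (y2-x2) = (m1-x1)*(y1-x1)+(m2-x2)*(y2-x2) + ((y1-m1)*(y1-x1)+(y2-m2)*(y2-x2)))
    by (unfold sq2; ring).
  split; [split|split].
  - apply Rmult_le_pos; [exact N1 | left; apply Rinv_0_lt_compat; lra].
  - apply (Rmult_le_reg_r (sq2 (y1-x1) (y2-x2))); auto.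
    unfold Rdiv. rewrite Rmult_assoc, Rinv_l, Rmult_1_r by lra. lra.
  - assert (E1 : (m1-x1)*sq2 (y1-x1) (y2-x2) - ((m1-x1)*(y1-x1)+(m2-x2)*(y2-x2))*(y1-x1)
       = -(y2-x2)*((y1-x1)*(m2-x2)-(y2-x2)*(m1-x1))) by (unfold sq2; ring).
    rewrite S1, Rmult_0_r in E1.
    apply (Rmult_eq_reg_r (sq2 (y1-x1) (y2-x2))); [|lra].
    replace ((x1 + ((m1 - x1) * (y1 - x1) + (m2 - x2) * (y2 - x2)) / sq2 (y1 - x1) (y2 - x2) * (y1 - x1)) * sq2 (y1 - x1) (y2 - x2))
      with (x1 * sq2 (y1 - x1) (y2 - x2) + ((m1 - x1) * (y1 - x1) + (m2 - x2) * (y2 - x2)) * (y1 - x1)) by (field; lra).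
    lra.
  - assert (E1 : (m2-x2)*sq2 (y1-x1) (y2-x2) - ((m1-x1)*(y1-x1)+(m2-x2)*(y2-x2))*(y2-x2)
       = (y1-x1)*((y1-x1)*(m2-x2)-(y2-x2)*(m1-x1))) by (unfold sq2; ring).
    rewrite S1, Rmult_0_r in E1.
    apply (Rmult_eq_reg_r (sq2 (y1-x1) (y2-x2))); [|lra].
    replace ((x2 + ((m1 - x1) * (y1 - x1) + (m2 - x2) * (y2 - x2)) / sq2 (y1 - x1) (y2 - x2) * (y2 - x2)) * sq2 (y1 - x1) (y2 - x2))
      with (x2 * sq2 (y1 - x1) (y2 - x2) + ((m1 - x1) * (y1 - x1) + (m2 - x2) * (y2 - x2)) * (y2 - x2)) by (field; lra).
    lra.
Qed.

Lemma nrm2_ge0 p : 0 <= nrm2 p.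
Proof. unfold nrm2. pose proof (Rle_0_sqr (fst p)); pose proof (Rle_0_sqr (snd p)); unfold Rsqr in *; lra. Qed.

Lemma disk_lt p : in_disk p -> nrm2 p < 1.
Proof.
  unfold in_disk, nrm. intro H. destruct (Rlt_or_le (nrm2 p) 1) as [h|h]; auto.
  apply sqrt_le_1_alt in h. rewrite sqrt_1 in h. lra.
Qed.

Lemma nrm2_psub_sym p q : nrm2 (psub p q) = nrm2 (psub q p).
Proof. unfold nrm2, psub; simpl; ring. Qed.

Lemma div_aux a b p q Z : 0 < p -> 0 < q -> a * q = b * p -> a / (p * Z) = b / (Z * q).
Proof.
  intros hp hq H. destruct (Req_dec Z 0) as [E|E].
  - subst. rewrite !Rmult_0_r, Rmult_0_l. unfold Rdiv. rewrite Rinv_0. ring.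
  - replace (a / (p*Z)) with (a*q/(p*q*Z)) by (field; repeat split; lra).
    replace (b / (Z*q)) with (b*p/(p*q*Z)) by (field; repeat split; lra).
    now rewrite H.
Qed.

Lemma rho_of_apol x y m : nrm2 x < 1 -> nrm2 y < 1 ->
  (1 - nrm2 y) * nrm2 (psub x m) = (1 - nrm2 x) * nrm2 (psub y m) -> rho x m = rho m y.
Proof.
  intros hx hy H. unfold rho. f_equal. f_equal. unfold dist, nrm.
  apply div_aux; try (apply sqrt_lt_R0; lra).
  rewrite <- !sqrt_mult; try lra; try apply nrm2_ge0.
  f_equal. rewrite (nrm2_psub_sym m y). lra.
Qed.

Lemma apol_of_rho x y m : nrm2 x < 1 -> nrm2 y < 1 -> nrm2 m < 1 -> rho x m = rho m y ->
  (1 - nrm2 y) * nrm2 (psub x m) = (1 - nrm2 x) * nrm2 (psub y m).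
Proof.
  intros hx hy hm H. unfold rho in H.
  assert (H2 : forall u v, 2 * arcsinh u = 2 * arcsinh v -> u = v).
  { intros u v E. rewrite <- (sinh_arcsinh u), <- (sinh_arcsinh v). f_equal. lra. }
  apply H2 in H. unfold dist, nrm in H.
  assert (pt_ : 0 < sqrt (1 - nrm2 x)) by (apply sqrt_lt_R0; lra).
  assert (ps : 0 < sqrt (1 - nrm2 y)) by (apply sqrt_lt_R0; lra).
  assert (pz : 0 < sqrt (1 - nrm2 m)) by (apply sqrt_lt_R0; lra).
  assert (E : sqrt (nrm2 (psub x m)) * sqrt (1 - nrm2 y) = sqrt (nrm2 (psub m y)) * sqrt (1 - nrm2 x)).
  { apply (Rmult_eq_reg_r (/ (sqrt (1 - nrm2 x) * sqrt (1 - nrm2 m) * sqrt (1 - nrm2 y)))).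
    2: { apply Rinv_neq_0_compat. apply Rgt_not_eq. repeat apply Rmult_lt_0_compat; auto. }
    replace (sqrt (nrm2 (psub x m)) * sqrt (1 - nrm2 y) * / (sqrt (1 - nrm2 x) * sqrt (1 - nrm2 m) * sqrt (1 - nrm2 y)))
      with (sqrt (nrm2 (psub x m)) / (sqrt (1 - nrm2 x) * sqrt (1 - nrm2 m))) by (field; repeat split; lra).
    rewrite H. field; repeat split; lra. }
  rewrite <- !sqrt_mult in E; try lra; try apply nrm2_ge0.
  apply sqrt_inj in E; try (apply Rmult_le_pos; try apply nrm2_ge0; lra).
  rewrite (nrm2_psub_sym m y) in E. lra.
Qed.

Lemma existence x1 x2 y1 y2 : sq2 x1 x2 < 1 -> sq2 y1 y2 < 1 -> (x1 <> y1 \/ x2 <> y2) ->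
  exists m, hyp_midpoint (x1,x2) (y1,y2) m.
Proof.
  intros hx hy hne.
  pose (D := mD x1 x2 y1 y2).
  exists (mMc x1 x2 y1 y2 x1 y1 / D, mMc x1 x2 y1 y2 x2 y2 / D).
  split.
  - unfold in_geodesic. unfold cross at 1 2. simpl.
    destruct (Req_dec (x1*y2 - x2*y1) 0) as [hk|hk].
    + left. split; auto.
      destruct (mid_coll x1 x2 y1 y2 hx hy hne hk) as (tau & Ht & E1 & E2).
      exists tau. split; auto. fold D in E1, E2. now rewrite E1, E2.
    + right. split; auto.
      destruct (mid_arc x1 x2 y1 y2 hx hy hk) as (Hc & Ex & Ey & Em & Hs).
      set (k := x1*y2 - x2*y1) in *.
      set (c1 := ((1+sq2 x1 x2)/2*y2 - (1+sq2 y1 y2)/2*x2)/k) in *.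
      set (c2 := ((1+sq2 y1 y2)/2*x1 - (1+sq2 x1 x2)/2*y1)/k) in *.
      fold D in Em, Hs.
      exists (c1,c2), (sqrt (sq2 c1 c2 - 1)).
      assert (rr : sqrt (sq2 c1 c2 - 1) * sqrt (sq2 c1 c2 - 1) = sq2 c1 c2 - 1) by (apply sqrt_sqrt; lra).
      repeat split.
      * apply sqrt_lt_R0; lra.
      * unfold nrm2; simpl. rewrite rr. unfold sq2; ring.
      * unfold dist, nrm. f_equal. exact Ex.
      * unfold dist, nrm. f_equal. exact Ey.
      * unfold dist, nrm. f_equal. exact Em.
      * unfold cross, psub; simpl. exact Hs.
  - apply rho_of_apol.
    + exact hx.
    + exact hy.
    + pose proof (mid_apol x1 x2 y1 y2 hx hy) as H. cbv zeta in H. fold D in H.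
      unfold nrm2, psub; simpl. exact H.
Qed.

Lemma m_in_disk x1 x2 y1 y2 m1 m2 : sq2 x1 x2 < 1 -> sq2 y1 y2 < 1 -> (x1 <> y1 \/ x2 <> y2) ->
  in_geodesic (x1,x2) (y1,y2) (m1,m2) -> sq2 m1 m2 < 1.
Proof.
  intros hx hy hne [[_ (tau & Ht & E)] | [_ (c & r & hr & hc & Dx & Dy & Dm & Hs)]].
  - injection E; intros E2 E1. subst m1 m2. unfold sq2 in *.
    assert (I : (x1 + tau*(y1-x1))*(x1 + tau*(y1-x1)) + (x2 + tau*(y2-x2))*(x2 + tau*(y2-x2))
       = (1-tau)*(x1*x1+x2*x2) + tau*(y1*y1+y2*y2) - tau*(1-tau)*((y1-x1)*(y1-x1)+(y2-x2)*(y2-x2))) by ring.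
    rewrite I. pose proof (sq2_ge0 (y1-x1) (y2-x2)). unfold sq2 in *.
    assert (0 <= tau*(1-tau)*((y1-x1)*(y1-x1)+(y2-x2)*(y2-x2))) by (apply Rmult_le_pos; [apply Rmult_le_pos|]; lra).
    assert ((1-tau)*(x1*x1+x2*x2) <= (1-tau)*1) by (apply Rmult_le_compat_l; lra).
    assert (tau*(y1*y1+y2*y2) <= tau*1) by (apply Rmult_le_compat_l; lra).
    destruct (Req_dec tau 0) as [e|e].
    + subst tau. lra.
    + assert (tau*(y1*y1+y2*y2) < tau*1) by (apply Rmult_lt_compat_l; lra). lra.
  - destruct c as [c1 c2].
    assert (sqd : forall p q, dist p q = r -> nrm2 (psub p q) = r*r).
    { intros p q H. unfold dist, nrm in H. rewrite <- H. rewrite sqrt_sqrt; auto. apply nrm2_ge0. }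
    apply sqd in Dx, Dy, Dm. unfold nrm2, psub in *; simpl in *.
    unfold cross, psub in Hs; simpl in Hs.
    unfold sq2 in *. apply (arc_coord x1 x2 y1 y2 m1 m2 c1 c2 r); auto.
Qed.

Lemma construct S x1 x2 y1 y2 m1 m2 : HS S -> S (x1,x2) -> S (y1,y2) ->
  sq2 x1 x2 < 1 -> sq2 y1 y2 < 1 -> (x1 <> y1 \/ x2 <> y2) ->
  hyp_midpoint (x1,x2) (y1,y2) (m1,m2) -> constructible S (m1,m2).
Proof.
  intros HS' Sx Sy hx hy hne [Hg Hr].
  assert (hm := m_in_disk _ _ _ _ _ _ hx hy hne Hg).
  assert (Ap := apol_of_rho (x1,x2) (y1,y2) (m1,m2) hx hy hm Hr).
  unfold nrm2, psub in Ap; simpl in Ap. fold (sq2 x1 x2) (sq2 y1 y2) in Ap.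
  set (a := sq2 x1 x2) in *. set (b := sq2 y1 y2) in *.
  set (d := a - b). set (w1 := (1-b)*x1 - (1-a)*y1). set (w2 := (1-b)*x2 - (1-a)*y2).
  assert (Bis : forall z1 z2, (1-b)*((x1-z1)*(x1-z1)+(x2-z2)*(x2-z2)) - (1-a)*((y1-z1)*(y1-z1)+(y2-z2)*(y2-z2))
     = d*(z1*z1+z2*z2) - 2*(z1*w1+z2*w2) + d).
  { intros. unfold d, w1, w2, a, b, sq2. ring. }
  assert (Bm : d*(m1*m1+m2*m2) - 2*(m1*w1+m2*w2) + d = 0) by (rewrite <- Bis; lra).
  assert (Kx : constructible S (x1,x2)) by (now apply cons_base).
  assert (Ky : constructible S (y1,y2)) by (now apply cons_base).
  assert (Cx1 := k_proj1 S _ HS' Kx). assert (Cx2 := k_proj2 S _ HS' Kx).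
  assert (Cy1 := k_proj1 S _ HS' Ky). assert (Cy2 := k_proj2 S _ HS' Ky). simpl in *.
  assert (Ca : cr S a) by (unfold a, sq2; crt HS').
  assert (Cb : cr S b) by (unfold b, sq2; crt HS').
  assert (Cw1 : cr S w1) by (unfold w1; crt HS').
  assert (Cw2 : cr S w2) by (unfold w2; crt HS').
  assert (Cd : cr S d) by (unfold d; crt HS').
  assert (K0 : constructible S (0,0)) by (destruct HS'; now apply cons_base).
  assert (hd : 0 < (x1-y1)*(x1-y1)+(x2-y2)*(x2-y2)).
  { destruct hne as [h|h].
    - assert (0 < (x1-y1)*(x1-y1)) by (apply Rsqr_pos_lt; lra).
      pose proof (Rle_0_sqr (x2-y2)); unfold Rsqr in *; lra.
    - assert (0 < (x2-y2)*(x2-y2)) by (apply Rsqr_pos_lt; lra).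
      pose proof (Rle_0_sqr (x1-y1)); unfold Rsqr in *; lra. }
  assert (Hxy : (x1,x2) <> (y1,y2)) by (intro E; injection E; intros; destruct hne; contradiction).
  destruct Hg as [[hk (tau & Ht & E)] | [hk (c & r & hr & hc & Dx & Dy & Dm & Hs)]].
  -
    assert (Lm : on_line (x1,x2) (y1,y2) (m1,m2)).
    { injection E; intros E2 E1. rewrite E1, E2. unfold on_line, cross, psub; simpl; ring. }
    destruct (Req_dec d 0) as [d0|dn].
    + assert (ab : a = b) by (unfold d in d0; lra).
      assert (Ew1 : w1 = (1-a)*(x1-y1)) by (unfold w1; rewrite ab; ring).
      assert (Ew2 : w2 = (1-a)*(x2-y2)) by (unfold w2; rewrite ab; ring).
      assert (a1 : 0 < 1 - a) by lra.
      apply (cons_ll S (x1,x2) (y1,y2) (0,0) (-w2,w1)); auto.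
      * apply k_pair; auto. crt HS'.
      * intro e. injection e; intros e1 e2.
        rewrite Ew1 in e1. rewrite Ew2 in e2.
        assert (x1 - y1 = 0).
        { symmetry in e1. apply Rmult_integral in e1. destruct e1; lra. }
        assert (x2 - y2 = 0).
        { assert (e2' : (1-a)*(x2-y2) = 0) by lra. apply Rmult_integral in e2'. destruct e2'; lra. }
        lra.
      * intro H. destruct (H (x1,x2)) as [H' _].
        assert (Hc : on_line (0,0) (-w2,w1) (x1,x2)) by (apply H'; unfold on_line, cross, psub; simpl; ring).
        unfold on_line, cross, psub in Hc; simpl in Hc.
        rewrite Ew1, Ew2 in Hc.
        match type of Hc with ?L = 0 => assert (E3 : L = -(1-a) * (((x1-y1)*(x1-y1)+(x2-y2)*(x2-y2))/2)) end.
        { assert (ab' : x1*x1+x2*x2 = y1*y1+y2*y2) by exact ab.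
          assert (Q : (x1-y1)*x1+(x2-y2)*x2 - ((x1-y1)*(x1-y1)+(x2-y2)*(x2-y2))/2 = ((x1*x1+x2*x2) - (y1*y1+y2*y2))/2) by field.
          rewrite ab' in Q. replace ((y1 * y1 + y2 * y2 - (y1 * y1 + y2 * y2)) / 2) with 0 in Q by field.
          assert (Q' : (x1-y1)*x1+(x2-y2)*x2 = ((x1-y1)*(x1-y1)+(x2-y2)*(x2-y2))/2) by lra.
          rewrite <- Q'. ring. }
        rewrite E3 in Hc.
        assert (0 < (1-a) * (((x1-y1)*(x1-y1)+(x2-y2)*(x2-y2))/2)) by (apply Rmult_lt_0_compat; lra).
        lra.
      * unfold on_line, cross, psub; simpl. rewrite d0 in Bm. lra.
    + set (q1 := w1/d). set (q2 := w2/d).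
      assert (Hn : (m1-q1)*(m1-q1)+(m2-q2)*(m2-q2) = q1*q1+q2*q2-1).
      { assert (T : (m1-q1)*(m1-q1)+(m2-q2)*(m2-q2) - (q1*q1+q2*q2-1) = (d*(m1*m1+m2*m2) - 2*(m1*w1+m2*w2) + d)/d)
          by (unfold q1, q2; field; exact dn).
        rewrite Bm in T. unfold Rdiv in T. rewrite Rmult_0_l in T. lra. }
      assert (n0 : 0 <= q1*q1+q2*q2-1).
      { rewrite <- Hn. pose proof (Rle_0_sqr (m1-q1)); pose proof (Rle_0_sqr (m2-q2)); unfold Rsqr in *; lra. }
      apply (cons_lc S (x1,x2) (y1,y2) (q1,q2) (q1 + sqrt (q1*q1+q2*q2-1), q2)); auto.
      * apply k_pair; auto; unfold q1, q2; crt HS'.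
      * apply k_pair; auto; unfold q1, q2; crt HS'.
      * unfold on_circle. apply dist_eq. unfold nrm2, psub; simpl.
        rewrite Hn. replace ((q1 + sqrt (q1 * q1 + q2 * q2 - 1) - q1) * (q1 + sqrt (q1 * q1 + q2 * q2 - 1) - q1))
          with (sqrt (q1 * q1 + q2 * q2 - 1) * sqrt (q1 * q1 + q2 * q2 - 1)) by ring.
        rewrite sqrt_sqrt by exact n0. ring.
  -
    destruct c as [c1 c2].
    assert (sqd : forall p q, dist p q = r -> nrm2 (psub p q) = r*r).
    { intros p q H. unfold dist, nrm in H. rewrite <- H. rewrite sqrt_sqrt; auto. apply nrm2_ge0. }
    assert (Dx' := sqd _ _ Dx). assert (Dy' := sqd _ _ Dy). assert (Dm' := sqd _ _ Dm).
    unfold nrm2, psub in Dx', Dy', Dm', hc; simpl in Dx', Dy', Dm', hc.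
    unfold cross in hk; simpl in hk.
    assert (cx : c1*x1+c2*x2 = (1+a)/2) by (unfold a, sq2; lra).
    assert (cy : c1*y1+c2*y2 = (1+b)/2) by (unfold b, sq2; lra).
    assert (cm : 2*(c1*m1+c2*m2) = m1*m1+m2*m2+1) by lra.
    assert (E1 : c1*(x1*y2 - x2*y1) = (c1*x1+c2*x2)*y2 - (c1*y1+c2*y2)*x2) by ring.
    assert (E2 : c2*(x1*y2 - x2*y1) = (c1*y1+c2*y2)*x1 - (c1*x1+c2*x2)*y1) by ring.
    rewrite cx, cy in E1, E2.
    assert (Ec1 : c1 = ((1+a)/2*y2 - (1+b)/2*x2)/(x1*y2 - x2*y1)) by (rewrite <- E1; field; exact hk).
    assert (Ec2 : c2 = ((1+b)/2*x1 - (1+a)/2*y1)/(x1*y2 - x2*y1)) by (rewrite <- E2; field; exact hk).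
    assert (Cc1 : cr S c1) by (rewrite Ec1; crt HS').
    assert (Cc2 : cr S c2) by (rewrite Ec2; crt HS').
    set (v1 := d*c1 - w1). set (v2 := d*c2 - w2).
    assert (Cv1 : cr S v1) by (unfold v1; crt HS').
    assert (Cv2 : cr S v2) by (unfold v2; crt HS').
    assert (Bx : d*(x1*x1+x2*x2) - 2*(x1*w1+x2*w2) + d < 0).
    { rewrite <- Bis. replace ((x1-x1)*(x1-x1)+(x2-x2)*(x2-x2)) with 0 by ring.
      assert (0 < 1 - a) by lra.
      assert (0 < (1-a)*((y1 - x1) * (y1 - x1) + (y2 - x2) * (y2 - x2))) by (apply Rmult_lt_0_compat; lra). lra. }
    apply (cons_lc S (0,0) (-v2,v1) (c1,c2) (x1,x2)); auto.
    + apply k_pair; auto. crt HS'.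
    + apply k_pair; auto.
    + intro E. injection E; intros e1 e2.
      assert (v2 = 0) by lra.
      assert (2*(x1*v1+x2*v2) = d*(x1*x1+x2*x2) - 2*(x1*w1+x2*w2) + d).
      { assert (cx2 : 2*(c1*x1+c2*x2) = x1*x1+x2*x2+1) by (rewrite cx; unfold a, sq2; field).
        assert (T : 2*(x1*v1+x2*v2) = d*(2*(c1*x1+c2*x2)) - 2*(x1*w1+x2*w2)) by (unfold v1, v2; ring).
        rewrite cx2 in T. rewrite T. ring. }
      rewrite <- e1, H in H0. lra.
    + unfold on_line, cross, psub; simpl.
      assert (2*(v1*m1+v2*m2) = d*(m1*m1+m2*m2) - 2*(m1*w1+m2*w2) + d).
      { assert (T : 2*(v1*m1+v2*m2) = d*(2*(c1*m1+c2*m2)) - 2*(m1*w1+m2*w2)) by (unfold v1, v2; ring).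
        rewrite cm in T. rewrite T. ring. }
      lra.
    + unfold on_circle. rewrite Dm, Dx. reflexivity.
Qed.

Theorem theorem1p2 (x y : pt) :
  in_disk x -> in_disk y -> x <> y ->
  (exists m, hyp_midpoint x y m) /\
  (forall m, hyp_midpoint x y m ->
     constructible (fun p => p = pzero \/ p = pone \/ p = x \/ p = y) m).
Proof.
  intros Hx Hy Hxy.
  apply disk_lt in Hx. apply disk_lt in Hy.
  destruct x as [x1 x2], y as [y1 y2].
  unfold nrm2 in Hx, Hy; simpl in Hx, Hy. fold (sq2 x1 x2) in Hx. fold (sq2 y1 y2) in Hy.
  assert (hne : x1 <> y1 \/ x2 <> y2).
  { destruct (Req_dec x1 y1) as [e1|e1]; [|now left].
    destruct (Req_dec x2 y2) as [e2|e2]; [|now right].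
    subst; contradiction. }
  split.
  - now apply existence.
  - intros [m1 m2] Hm. apply (construct _ x1 x2 y1 y2); auto.
    all: first [ split; [now left | now (right; left)] | now (right; right; left) | now (right; right; right) ].
Qed.
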